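(* Let $L$ be a positive integer, $S\ge 2$ an integer with $2^S\mid L$, and let $\{a_i(k)\}_{i\in\mathbb Z_L}$, $k\in\mathcal K=\mathbb Z_L$, be binary sequences (indexed by one period) satisfying: for every $s$ distinct keys $k_1,\ldots,k_S\in\mathcal K$ and all $b_1,\ldots,b_S\in\{0,1\}$, $$|A_{b_1\ldots b_S}(k_1,\ldots,k_S)|=L/2^S.$$ Let $0<\gamma<1$ with $\gamma L$ an integer, and let $2\le s\le S$. Let $r$ be the integer with $P_s(r)\le\gamma/2<P_s(r+1)$. Then for every set $T\subset\mathbb Z_L$ with $|T|=\gamma L$ and every guessing function $g:T\to\{0,1\}$, and for every $s$ distinct keys $k_1,\ldots,k_s\in\mathcal K$, $$\min_{1\le i\le s}\bigl|\{j\in T: g(j)=a_j(k_i)\}\bigr|\le n_{\rm correct}(\gamma):=L\Bigl\{P_{s-1}(r)+\frac{s-r-1}{s}\bigl(\gamma-2P_s(r)\bigr)\Bigr\}.$$ Equivalently, for every such $T$ and $g$, fewer than $s$ keys $k\in\mathcal K$ satisfy $|\{j\in T: g(j)=a_j(k)\}|>n_{\rm correct}(\gamma)$; in particular, if the key is uniformly distributed on $\mathcal K$, the number of correctly guessed bits does not exceed $n_{\rm correct}(\gamma)$ with probability at least $1-s/|\mathcal K|$.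
   Context: $\mathbb Z_L=\{0,\ldots,L-1\}$ is the residue ring modulo $L$. For distinct keys $k_1,\ldots,k_s$ and bits $b_1,\ldots,b_s$, $A_{b_1\ldots b_s}(k_1,\ldots,k_s)=\{i\in\mathbb Z_L: a_i(k_1)=b_1,\ldots,a_i(k_s)=b_s\}$. For integers $s\ge1$ and $t$, $P_s(t)=\Pr[X_s\le t]=2^{-s}\sum_{u=0}^{t}\binom{s}{u}$, where $X_s$ is binomial with $s$ trials and success probability $1/2$ (so $P_s(t)=0$ for $t<0$). *)

(* Defs.v *)
From HB Require Import structures.
From mathcomp Require Import all_boot all_order all_algebra.
Set Implicit Arguments. Unset Strict Implicit. Unset Printing Implicit Defensive.
Import Order.TTheory GRing.Theory Num.Theory.
Local Open Scope ring_scope.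

(* The binary sequences: a k i = a_i(k), key k in Z_L, position i in Z_L. *)

Definition Aset (L s : nat) (a : 'I_L -> 'I_L -> bool)
  (k : 'I_s -> 'I_L) (b : 'I_s -> bool) : {set 'I_L} :=
  [set i : 'I_L | [forall t : 'I_s, a (k t) i == b t]].

Definition Pbin (s : nat) (t : int) : rat :=
  match t with
  | Posz n => (2%:R ^+ s)^-1 * \sum_(0 <= u < n.+1) ('C(s, u))%:R
  | Negz _ => 0
  end.

Definition ncorrect (L s : nat) (r : int) (gamma : rat) : rat :=
  L%:R * (Pbin s.-1 r
          + ((s%:Z - r - 1)%:~R / s%:R) * (gamma - 2%:R * Pbin s r)).

(* Main.v *)
Require Import Defs.
From HB Require Import structures.
From mathcomp Require Import all_boot all_order all_algebra zify.
Import Order.TTheory GRing.Theory Num.Theory.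
From mathcomp Require Import ring lra.

Lemma Aset_ext L m (a : 'I_L -> 'I_L -> bool) (k : 'I_m -> 'I_L) (b : 'I_m -> bool) x c :
  let k2 := fun t : 'I_m.+1 => if unlift ord_max t is Some t' then k t' else x in
  let b2 := fun t : 'I_m.+1 => if unlift ord_max t is Some t' then b t' else c in
  Aset a k2 b2 = Aset a k b :&: [set j | a x j == c].
Proof.
move=> k2 b2; apply/setP => j; rewrite !inE.
apply/forallP/andP => [H|[/forallP H1 H2] t].
  split; last by have := H ord_max; rewrite /k2 /b2 unlift_none.
  by apply/forallP => t; have := H (lift ord_max t); rewrite /k2 /b2 liftK.
by rewrite /k2 /b2; case: unliftP => [t'|] _.
Qed.

Lemma bal_all L S (a : 'I_L -> 'I_L -> bool) (HL : (0 < L)%N) (Hdiv : (2 ^ S %| L)%N)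
  (Hbal : forall (k : 'I_S -> 'I_L) (b : 'I_S -> bool), injective k ->
            (#|Aset a k b| * 2 ^ S)%N = L) :
  forall m, (m <= S)%N -> forall (k : 'I_m -> 'I_L), injective k -> forall b,
    (#|Aset a k b| * 2 ^ m)%N = L.
Proof.
have HLS : (S < L)%N.
  apply: leq_trans (ltn_expl S (isT : (1 < 2)%N)) (dvdn_leq HL Hdiv).
move=> m Hm.
have [d Hd] : exists d, S - m = d by eexists.
elim: d m Hm Hd => [|d IH] m Hm Hd.
  have Em : m = S by lia.
  by subst m => k Hk b; exact: Hbal.
move=> k Hk b.
have Hm1 : (m.+1 <= S)%N by lia.
have /set0Pn [x Hx] : ~: [set y in codom k] != set0.
  apply/eqP => H0; have := cardsC [set y in codom k]; rewrite H0 cards0 addn0 card_ord.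
  have := max_card (mem (codom k)). rewrite cardsE card_codom // card_ord => h1 h2.
  lia.
have Hx' : x \notin codom k by move: Hx; rewrite !inE.
pose k2 := fun t : 'I_m.+1 => if unlift ord_max t is Some t' then k t' else x.
have Hk2 : injective k2.
  rewrite /k2 => t1 t2.
  case: unliftP => [t1'|] -> ; case: unliftP => [t2'|] -> //.
  - by move/Hk ->.
  - by move=> E; move: Hx'; rewrite -E codom_f.
  - by move=> E; move: Hx'; rewrite E codom_f.
have E1 := IH m.+1 Hm1 (ltac:(lia)) k2 Hk2.
have A1 := E1 (fun t => if unlift ord_max t is Some t' then b t' else true).
have A2 := E1 (fun t => if unlift ord_max t is Some t' then b t' else false).
rewrite Aset_ext in A1; rewrite Aset_ext in A2.
rewrite -(cardsID [set j | a x j == true]).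
have -> : Aset a k b :\: [set j | a x j == true] = Aset a k b :&: [set j | a x j == false].
  by apply/setP => j; rewrite !inE; case: (a x j); rewrite ?andbT ?andbF.
move: A1 A2; rewrite expnS; set n1 := #|_ :&: [set j | a x j == true]|; set n2 := #|_ :&: [set j | a x j == false]|; lia.
Qed.
Lemma sum_pattern L s (a : 'I_L -> 'I_L -> bool) (k : 'I_s -> 'I_L)
  (Hb : forall b, (#|Aset a k b| * 2 ^ s)%N = L) (phi : {set 'I_s} -> nat) :
  (2 ^ s * \sum_(j : 'I_L) phi [set t | a (k t) j] = L * \sum_(B : {set 'I_s}) phi B)%N.
Proof.
rewrite (partition_big (fun j => [set t | a (k t) j]) predT) //.
rewrite !big_distrr; apply: eq_bigr => B _.
rewrite (eq_bigr (fun _ => phi B)); last by move=> j /eqP ->.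
rewrite sum_nat_const.
have HC : (#|[pred i | [set t | a (k t) i] == B]| * 2 ^ s = L)%N.
  rewrite -[RHS](Hb (fun t => t \in B)); congr (_ * _).
  apply: eq_card => j; rewrite inE.
  rewrite /Aset inE; apply/eqP/forallP => [<- t|H]; first by rewrite inE.
  by apply/setP => t; rewrite inE; exact/eqP/H.
move: HC; set c := #|_| => HC; rewrite -HC /=; lia.
Qed.
Lemma sum_card s (phi : nat -> nat) :
  (\sum_(B : {set 'I_s}) phi #|B| = \sum_(0 <= w < s.+1) 'C(s, w) * phi w)%N.
Proof.
rewrite (partition_big (fun B : {set 'I_s} => (inord #|B| : 'I_s.+1)) predT) //=.
rewrite big_mkord; apply: eq_bigr => w _.
have Hc (B : {set 'I_s}) : (#|B| <= s)%N by exact: (leq_trans (max_card _) (eq_leq (card_ord s))).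
rewrite (eq_bigr (fun _ => phi w)); last first.
  by move=> B /eqP <-; rewrite inordK // ltnS Hc.
have -> : 'C(s, w) = #|[set A : {set 'I_s} | #|A| == w]| by rewrite card_draws card_ord.
rewrite sum_nat_const; congr (_ * _).
apply: eq_card => B; rewrite !inE /=.
by rewrite unfold_in /= inordK // ltnS Hc.
Qed.

Lemma sum_compl s (phi : nat -> nat) :
  (\sum_(B : {set 'I_s}) phi #|~: B| = \sum_(B : {set 'I_s}) phi #|B|)%N.
Proof. by rewrite [RHS](reindex_inj (@setC_inj _)). Qed.

Lemma card_sum (I J : finType) (A : {set I}) (P : I -> J -> bool) :
  (\sum_(j : J) #|[set i in A | P i j]| = \sum_(i in A) #|[set j | P i j]|)%N.
Proof.
have E (X : finType) (B : {set X}) (Q : X -> bool) : #|[set x in B | Q x]| = (\sum_(x in B) Q x)%N.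
  rewrite -sum1_card big_mkcond [RHS]big_mkcond /=; apply: eq_bigr => x _.
  by rewrite !inE; case: (x \in B); case: (Q x).
rewrite (eq_bigr (fun j => \sum_(i in A) P i j)%N); last by move=> j _; rewrite E.
rewrite exchange_big /=; apply: eq_bigr => i _.
rewrite (_ : \sum_(j:J) P i j = \sum_(j in [set: J]) P i j)%N; last by apply: eq_bigl => j; rewrite inE.
by rewrite -E; apply: eq_card => j; rewrite !inE.
Qed.

Lemma core L s (a : 'I_L -> 'I_L -> bool) (k : 'I_s -> 'I_L)
  (Hb : forall b, (#|Aset a k b| * 2 ^ s)%N = L) (T : {set 'I_L}) (g : 'I_L -> bool) (n : nat) :
  (2 ^ s * (\sum_(i : 'I_s) #|[set j in T | g j == a (k i) j]| + #|T| * n.+1) <=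
   2 ^ s * (#|T| * s) + L * (2 * \sum_(0 <= w < s.+1) 'C(s, w) * (n.+1 - w)))%N.
Proof.
pose psi w := (n.+1 - w)%N.
pose F (j : 'I_L) := (psi #|[set t | a (k t) j]| + psi #|~: [set t | a (k t) j]|)%N.
have Hpt j : (#|[set i | g j == a (k i) j]| + n.+1 <= s + F j)%N.
  have Hs := cardsC [set t | a (k t) j]; rewrite card_ord in Hs.
  have Hc : #|[set i | g j == a (k i) j]| = if g j then #|[set t | a (k t) j]| else #|~: [set t | a (k t) j]|.
    by case: (g j); apply: eq_card => i; rewrite !inE; case: (a (k i) j).
  rewrite /F /psi Hc; case: (g j); lia.
have HFs : (\sum_(j in T) F j <= \sum_j F j)%N.
  by rewrite [X in (_ <= X)%N](bigID (fun j => j \in T)) /= leq_addr.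
have H1 : (\sum_(i : 'I_s) #|[set j in T | g j == a (k i) j]| + #|T| * n.+1 <= #|T| * s + \sum_j F j)%N.
  rewrite (card_sum _ _ T (fun j i => g j == a (k i) j)) -sum_nat_const -big_split /=.
  apply: (leq_trans _ (leq_add (leqnn (#|T| * s)) HFs)).
  rewrite -sum_nat_const -big_split /=; exact: leq_sum.
have H2 : (2 ^ s * \sum_j F j = L * (2 * \sum_(0 <= w < s.+1) 'C(s, w) * (n.+1 - w)))%N.
  rewrite /F big_split /= mulnDr.
  rewrite (sum_pattern _ _ _ _ Hb (fun B => psi #|B|)) (sum_pattern _ _ _ _ Hb (fun B => psi #|~: B|)).
  rewrite (sum_compl _ (fun w => psi w)) (sum_card _ (fun w => psi w)); by rewrite mul2n -addnn mulnDr.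
rewrite -H2 -mulnDr leq_mul2l H1 orbT //.
Qed.

Local Open Scope ring_scope.

Lemma sum_widen (F : nat -> nat) n m N : (n <= N)%N -> (m <= N)%N ->
  (forall u, (n <= u)%N -> F u = 0%N) -> (forall u, (m <= u)%N -> F u = 0%N) ->
  (\sum_(0 <= u < n) F u = \sum_(0 <= u < m) F u)%N.
Proof.
move=> HnN HmN Fn Fm.
rewrite (big_nat_widen _ _ _ _ _ HnN) (big_nat_widen _ _ _ _ _ HmN).
rewrite [LHS]big_mkcond [RHS]big_mkcond; apply: eq_bigr => u _ /=.
case: ltnP => h1; case: ltnP => h2 //; [by rewrite Fm | by rewrite Fn].
Qed.

Lemma ident s n : (0 < s)%N ->
  (\sum_(0 <= u < n.+1) ('C(s.-1, u))%:R) * (s%:R : rat) =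
  (s%:R - n.+1%:R) * \sum_(0 <= u < n.+1) ('C(s, u))%:R
  + (\sum_(0 <= w < s.+1) 'C(s, w) * (n.+1 - w))%N%:R.
Proof.
move=> Hs.
rewrite (sum_widen (fun w => 'C(s, w) * (n.+1 - w))%N s.+1 n.+1 (s + n).+2); try lia.
all: try (by move=> u Hu; rewrite bin_small).
rewrite natr_sum big_distrl big_distrr -big_split /=; apply: eq_big_nat => u /andP [_ Hu].
  have := mul_bin_down s u; rewrite mulnC => /(congr1 (fun x => x%:R : rat)); rewrite natrM => ->.
  case: (leqP u s) => Hus.
    rewrite natrM natrM natrB // natrB; last by lia.
    ring.
  by rewrite bin_small // !muln0 !mul0n !mulr0 addr0.
Qed.

Theorem theorem1
  (L S : nat) (a : 'I_L -> 'I_L -> bool)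
  (HL : (0 < L)%N) (HS : (2 <= S)%N) (Hdiv : (2 ^ S %| L)%N)
  (Hbal : forall (k : 'I_S -> 'I_L) (b : 'I_S -> bool), injective k ->
            (#|Aset a k b| * 2 ^ S)%N = L)
  (gamma : rat) (Hg0 : 0 < gamma) (Hg1 : gamma < 1)
  (HgL : exists m : nat, gamma * L%:R = m%:R)
  (s : nat) (Hs2 : (2 <= s)%N) (HsS : (s <= S)%N)
  (r : int) (Hr1 : Pbin s r <= gamma / 2%:R) (Hr2 : gamma / 2%:R < Pbin s (r + 1))
  (T : {set 'I_L}) (HT : #|T|%:R = gamma * L%:R)
  (g : 'I_L -> bool)
  (k : 'I_s -> 'I_L) (Hk : injective k) :
  exists i : 'I_s,
    (#|[set j in T | g j == a (k i) j]|)%:R <= ncorrect L s r gamma.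
Proof.
have Hbs : forall b, (#|Aset a k b| * 2 ^ s)%N = L by move=> b; exact: (bal_all L S a HL Hdiv Hbal s HsS k Hk b).
have Hs0 : (0 < s)%N by lia.
pose C (i : 'I_s) := #|[set j in T | g j == a (k i) j]|.
case: (@arg_minnP _ (Ordinal Hs0) predT C isT) => i0 _ Hmin.
exists i0; rewrite -/(C i0).
have HX : (s * C i0 <= \sum_(i : 'I_s) C i)%N.
  have : (\sum_(i : 'I_s) C i0 <= \sum_(i : 'I_s) C i)%N by apply: leq_sum => i _; exact: Hmin.
  by rewrite sum_nat_const card_ord.
have HCT : (C i0 <= #|T|)%N.
  by apply: subset_leq_card; apply/subsetP => j; rewrite inE => /andP [].
have HLp : (0 : rat) < L%:R by rewrite ltr0n.
have Hsp : (0 : rat) < s%:R by rewrite ltr0n.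
case: r Hr1 Hr2 => n Hr1 Hr2.
-
  have PB m : Pbin m (Posz n) = (2%:R ^+ m)^-1 * \sum_(0 <= u < n.+1) ('C(m, u))%:R by [].
  rewrite /ncorrect !PB intrB intrB /=.
  set D := \sum_(0 <= u < n.+1) ('C(s.-1, u))%:R.
  set A := \sum_(0 <= u < n.+1) ('C(s, u))%:R.
  have Hid := ident s n Hs0; rewrite -/D -/A in Hid.
  set Q := (\sum_(0 <= w < s.+1) 'C(s, w) * (n.+1 - w))%N in Hid.
  have Hc := core L s a k Hbs T g n; rewrite -/Q in Hc.
  move: Hc; rewrite -(ler_nat rat) !(natrD, natrM, natrX) HT => Hc.
  move: HX; rewrite -(ler_nat rat) natrM => HX.
  set X := ((\sum_(i : 'I_s) C i)%N%:R : rat) in HX Hc.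
  set E' := (2%:R ^+ s.-1 : rat).
  have Es : (2%:R ^+ s : rat) = 2%:R * E' by rewrite /E'; case: (s) Hs0 => //= s' _; rewrite exprS.
  rewrite Es in Hc *.
  set E := (2%:R ^+ s : rat) in Hc.
  have E'p : 0 < E' by rewrite /E' exprn_gt0.
  have -> : (s%:~R - n%:~R - 1%:~R : rat) = s%:R - n%:R - 1 by [].
  have HD : D = ((s%:R - n.+1%:R) * A + Q%:R) / s%:R.
    rewrite -Hid; field; exact: lt0r_neq0.
  have E'n : E' != 0 by exact: lt0r_neq0.
  have sn : (s%:R : rat) != 0 by exact: lt0r_neq0.
  set Y := L%:R * (2 * Q%:R) + 2 * E' * (gamma * L%:R * (s%:R - n%:R - 1)).
  have HR : L%:R * (E'^-1 * D + (s%:R - n%:R - 1) / s%:R * (gamma - 2 * ((2 * E')^-1 * A)))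
            = ((2 * E')^-1 * (s%:R)^-1) * Y.
    rewrite HD /Y -natr1; field; rewrite sn E'n //.
  rewrite HR.
  have -> : ((C i0)%:R : rat) = ((2 * E')^-1 * (s%:R)^-1) * (2 * E' * (s%:R * (C i0)%:R)).
    field; rewrite sn E'n //.
  apply: ler_wpM2l.
    by rewrite mulr_ge0 // invr_ge0 ?mulr_ge0 // ?ltW.
  have H1 := mulr_ge0 (ltW E'p) (_ : 0 <= X - s%:R * (C i0)%:R).
  rewrite subr_ge0 in H1; have {}H1 := H1 HX.
  rewrite /Y -natr1.
  nra.
- have PB m : Pbin m (Negz n) = 0 by [].
  rewrite /ncorrect !PB mulr0 subr0 add0r.
  have -> : (s%:Z - Negz n - 1)%:~R = ((s + n)%N%:R : rat).
    have -> : (s%:Z - Negz n - 1) = (s + n)%N%:Z by rewrite NegzE; lia.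
    by [].
  move: HCT; rewrite -(ler_nat rat) HT => HCT.
  have -> : L%:R * ((s + n)%N%:R / s%:R * gamma) = gamma * L%:R + gamma * L%:R * n%:R / s%:R.
    rewrite natrD; field; exact: lt0r_neq0.
  have : 0 <= gamma * L%:R * n%:R / s%:R.
    by rewrite divr_ge0 ?mulr_ge0 // ltW.
  lra.
Qed.
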